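(* Let $p$ be a prime and $P=C_p\wr C_p$ (the regular wreath product of two cyclic groups of order $p$). Then $\eta_i(P)=Z_i(P)$ for all $i\ge 0$, where $Z_i(P)$ is the $i$-th term of the upper central series.
   Context: For a finite $p$-group $P$, a normal subgroup $N$ of $P$ is powerfully embedded in $P$ if $[N,P]\le N^p$ when $p$ is odd, and $[N,P]\le N^4$ when $p=2$ (here $N^{k}$ denotes the subgroup generated by all $k$-th powers of elements of $N$). $\eta(P)$ denotes the largest powerfully embedded subgroup of $P$ (the product of all powerfully embedded subgroups of $P$). The upper $\eta$-series of $P$ is defined by $\eta_0(P)=1$ and $\eta_{i+1}(P)/\eta_i(P)=\eta(P/\eta_i(P))$ for $i\ge 0$. *)

(* Defs.v *)
From mathcomp Require Import all_boot all_fingroup all_solvable.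
Set Implicit Arguments. Unset Strict Implicit. Unset Printing Implicit Defensive.
Local Open Scope group_scope.

Section EtaDefs.
Variables (p : nat) (gT : finGroupType).

Definition pow_subgroup (N : {set gT}) (k : nat) : {set gT} :=
  <<[set x ^+ k | x in N]>>.

Definition powerfully_embedded (N P : {set gT}) : bool :=
  (N <| P) && ([~: N, P] \subset pow_subgroup N (if p == 2 then 4 else p)).

Definition eta_sub (P : {set gT}) : {set gT} :=
  <<\bigcup_(N : {group gT} | powerfully_embedded N P) N>>.

End EtaDefs.

Definition upper_eta (p n : nat) (gT : finGroupType) (A : {set gT}) : {set gT} :=
  iter n (fun B => coset B @*^-1 eta_sub p (A / B)) 1.

(* P is (internally) the regular wreath product C_p wr C_p:
   P = A ><| <[x]> with A = a_0 x ... x a_{p-1} a direct product of cyclic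
   groups of order p, a_i = a^(x^i), and #[x] = p (x permutes the factors
   cyclically since x^p = 1). *)
Definition is_wreath_CpCp (p : nat) (gT : finGroupType) (P : {set gT}) : Prop :=
  exists a x : gT,
    [/\ #[a] = p, #[x] = p &
        (\big[dprod/1]_(i < p) <[a ^ (x ^+ i)]>) ><| <[x]> = P].

(* Main.v *)
Require Import Defs.
From mathcomp Require Import all_boot all_fingroup all_solvable.
Set Implicit Arguments. Unset Strict Implicit. Unset Printing Implicit Defensive.
Local Open Scope group_scope.


Lemma eta_sub_center p (gT : finGroupType) (Q : {group gT}) :
  (forall N : {group gT}, N <| Q ->
     [~: N, Q] \subset pow_subgroup N (if p == 2 then 4 else p) -> N \subset 'Z(Q)) ->
  eta_sub p Q = 'Z(Q).
Proof.
move=> H; apply/eqP; rewrite eqEsubset; apply/andP; split.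
  by rewrite gen_subG; apply/bigcupsP => N /andP[nNQ cN]; exact: H.
have hZ : powerfully_embedded p 'Z(Q) Q.
  rewrite /powerfully_embedded center_normal /=.
  by rewrite (commG1P _) ?sub1G // subsetIr.
by apply/subsetP => z Zz; apply: mem_gen; apply/bigcupP; exists 'Z(Q)%G.
Qed.

Lemma max_gen (gT : finGroupType) p (P A H : {group gT}) g :
  prime p -> A <| P -> #|P : A| = p -> g \in P -> g \notin A ->
  A \subset H -> H \subset P -> g \in H -> H :=: P.
Proof.
move=> pr nsAP iA Pg gnA sAH sHP Hg.
have maxA : maximal A P by apply: p_index_maximal; rewrite ?iA // normal_sub.
case/maxgroupP: maxA => _ maxA.
case: (boolP (H \proper P)) => [prH | nprH].
  by have := maxA H prH sAH => eHA; rewrite -eHA Hg in gnA.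
apply/eqP; rewrite eqEsubset sHP /=.
by move: nprH; rewrite properE sHP /= negbK.
Qed.

Lemma bigdprod_abel_exp (gT : finGroupType) (p : nat) I (r : seq I) (Pr : pred I)
   (F : I -> {set gT}) (G : {group gT}) :
 (forall i, Pr i -> abelian (F i) /\ {in F i, forall g, g ^+ p = 1}) ->
 \big[dprod/1]_(i <- r | Pr i) F i = G -> abelian G /\ {in G, forall g, g ^+ p = 1}.
Proof.
move=> hF; elim/big_rec: _ G => [G eG | i B Pi IH G defG].
  by rewrite -eG; split; [exact: abelian1 | move=> g /set1P ->; rewrite expg1n].
have [[K H defK defB] <- cKH _] := dprodP defG.
have [aH eH] := IH H defB; have [aK eK] := hF i Pi; rewrite defK in aK eK.
rewrite defK defB in cKH *; split; first by rewrite abelianM aK aH /=; apply/centsP => u Ku v Hv; apply: (centsP cKH).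
move=> g /mulsgP[k h Kk Hh ->]; rewrite expgMn; last first.
  by apply: commute_sym; apply: (centsP cKH).
by rewrite eK ?eH ?mulg1.
Qed.

Lemma finish_center (gT : finGroupType) (Q N : {group gT}) k :
  N <| Q -> [~: N, Q] \subset pow_subgroup N k -> {in N, forall y, y ^+ k = 1} ->
  N \subset 'Z(Q).
Proof.
move=> nNQ cN W1.
have: [~: N, Q] \subset [1 gT].
  apply: subset_trans cN _; rewrite /pow_subgroup gen_subG.
  by apply/subsetP => z /imsetP[y Ny ->]; rewrite W1 // group1.
move/trivgP/commG1P => cNQ.
by rewrite subsetI normal_sub.
Qed.

Lemma abstract_main p (gT : finGroupType) (P A : {group gT}) :
  prime p -> A <| P -> #|P : A| = p -> abelian A -> {in A, forall g, g ^+ p = 1} ->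
  (odd p -> 'Z_2(P) \subset A) -> forall i, upper_eta p i P = 'Z_i(P).
Proof.
move=> pr nsAP iA cAA eA Z2A.
have nAP := normal_norm nsAP; have sAP := normal_sub nsAP.
have D1 g : g \in P -> g ^+ p \in A.
  move=> Pg; have Ng : g \in 'N(A) := subsetP nAP g Pg.
  apply: coset_idr; first by rewrite groupX.
  rewrite morphX // -iA -card_quotient //; exact: expg_cardG (mem_quotient _ Pg).
have D2 g : g \in P -> g ^+ p \in 'Z(P).
  move=> Pg; have Ag := D1 g Pg.
  case: (boolP (g \in A)) => [gA | gnA]; first by rewrite eA // group1.
  have sAC : A \subset 'C_P[g ^+ p].
    rewrite subsetI sAP sub_cent1; exact: (subsetP cAA).
  have eC := max_gen pr nsAP iA Pg gnA sAC (subsetIl _ _).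
  have gC : g \in 'C_P[g ^+ p] by rewrite inE Pg; apply/cent1P; exact: commuteX.
  rewrite inE (subsetP sAP) // -sub_cent1 -(eC gC); exact: subsetIr.
have key i (N : {group coset_of 'Z_i(P)}) : N <| P / 'Z_i(P) ->
    [~: N, P / 'Z_i(P)] \subset pow_subgroup N (if p == 2 then 4 else p) ->
    N \subset 'Z(P / 'Z_i(P)).
  move=> nNQ cN; apply: (finish_center nNQ cN).
  case: (even_prime pr) => [p2 | op].
    move=> y Ny; case/morphimP: (subsetP (normal_sub nNQ) y Ny) => g Ng Pg ->.
    rewrite -morphX // p2 /= (_ : 4 = 2 * 2)%N // expgM.
    have g2A : g ^+ 2 \in A by rewrite -p2; apply: D1.
    by rewrite -{2}p2 eA // morph1.
  have p2F : (p == 2) = false by apply/eqP => p2; rewrite p2 in op.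
  rewrite p2F in cN *; move: N nNQ cN; case: i => [|i] N nNQ cN; last first.
    move=> y Ny; case/morphimP: (subsetP (normal_sub nNQ) y Ny) => g Ng Pg ->.
    rewrite -morphX //; apply: coset_id.
    apply: (subsetP (ucn_sub_geq P (isT : 0 < i.+1))).
    by have := D2 g Pg; rewrite -ucn1.
  have Wz : {in N, forall y, y ^+ p \in 'Z(P / 'Z_0(P))}.
    move=> y Ny; case/morphimP: (subsetP (normal_sub nNQ) y Ny) => g Ng Pg ->.
    rewrite -morphX // -ucn1 -(quotient_ucn_add 1 0 P); apply: mem_quotient.
    by rewrite addn0; have := D2 g Pg; rewrite -ucn1.
  have cNZ : [~: N, P / 'Z_0(P)] \subset 'Z(P / 'Z_0(P)).
    apply: subset_trans cN _; rewrite /pow_subgroup gen_subG.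
    by apply/subsetP => z /imsetP[y Ny ->]; exact: Wz.
  have NZ2 : N \subset 'Z_2(P / 'Z_0(P)).
    apply/subsetP => y Ny; rewrite ucnSnR inE (subsetP (normal_sub nNQ)) //= ucn1.
    by apply: subset_trans cNZ; apply: commSg; rewrite sub1set.
  move=> y Ny; have := subsetP NZ2 y Ny; rewrite -(quotient_ucn_add 2 0 P).
  case/morphimP => g Ng Zg ->; rewrite -morphX // (eA g) ?morph1 //.
  by apply: (subsetP (Z2A op)); rewrite addn0 in Zg.
elim=> [|i IH]; first by rewrite /upper_eta /= ucn0.
rewrite /upper_eta iterS -/(upper_eta p i P) IH ucnSn.
by rewrite (eta_sub_center (Q := (P / 'Z_i(P))%G)) //; apply: key.
Qed.

Lemma wreath_facts p (gT : finGroupType) (P : {group gT}) :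
  prime p -> is_wreath_CpCp p P ->
  exists A : {group gT}, [/\ A <| P, #|P : A| = p, abelian A,
    {in A, forall g, g ^+ p = 1} & (odd p -> 'Z_2(P) \subset A)].
Proof.
move=> pr [a [x [oa ox defP]]].
have [[AG X defA dX] _ _ _] := sdprodP defP.
have genA := bigdprodWY defA.
rewrite defA in defP.
have [nsAP sXP mulAX nAX tiAX] := sdprod_context defP.
have nAP := normal_norm nsAP; have sAP := normal_sub nsAP.
have iA : #|P : AG| = p by rewrite -(index_sdprod defP); exact: ox.
have [cAA eA] : abelian AG /\ {in AG, forall g, g ^+ p = 1}.
  apply: (bigdprod_abel_exp _ defA) => i _; split; first exact: cycle_abelian.
  move=> g /cycleP[m ->]; rewrite -expgM mulnC expgM.
  by rewrite -{2}oa -(orderJ a (x ^+ i)) expg_order expg1n.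
exists AG; split => // op.
have p0 : 0 < p by apply: prime_gt0.
have p2 : 2 < p by apply: odd_prime_gt2.
have p1 : 1 < p by apply: ltnW.
pose i0 : 'I_p := Ordinal p0; pose i1 : 'I_p := Ordinal p1; pose i2 : 'I_p := Ordinal p2.
have Px : x \in P by rewrite (subsetP sXP) // cycle_id.
have Aa : a \in AG.
  rewrite -genA; apply: mem_gen; apply/bigcupP; exists i0 => //=.
  by rewrite expg0 conjg1 cycle_id.
have Pa : a \in P by rewrite (subsetP sAP).
apply/subsetP => g Zg; apply/negPn/negP => gnA.
have Pg : g \in P := subsetP (ucn_sub 2 P) g Zg.
have cgZ h : h \in P -> [~ g, h] \in 'Z(P).
  move=> Ph; move: Zg; rewrite ucnSnR inE => /andP[_ sZ]; rewrite -ucn1.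
  by apply: (subsetP sZ); apply: mem_commg; rewrite ?set11.
pose z := [~ a, g].
have Zz : z \in 'Z(P) by rewrite /z -invg_comm groupV cgZ.
have cz h : h \in P -> commute z h.
  by move=> Ph; move: Zz => /setIP[_ /centP cZ]; apply: cZ.
have conjz m : a ^ (g ^+ m) = a * z ^+ m.
  elim: m => [|m IHm]; first by rewrite expg0 conjg1 mulg1.
  rewrite expgSr conjgM IHm conjMg conjg_mulR -/z.
  rewrite (conjg_fixP _); last first.
    by apply/commgP; rewrite -(expg1 g); apply: commuteX2; apply: cz.
  by rewrite -mulgA -expgS.
have sgP : <[g]> \subset P by rewrite cycle_subG.
have PAg : (AG <*> <[g]>)%G :=: P.
  apply: (max_gen pr nsAP iA Pg gnA); first exact: joing_subl.
    by rewrite join_subG sAP.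
  exact: (subsetP (joing_subr AG <[g]>) g (cycle_id g)).
have : x \in AG * <[g]>.
  by rewrite -norm_joinEr ?PAg // cycle_subG (subsetP nAP).
case/mulsgP => c gm Ac /cycleP[m ->] ex.
pose w := z ^+ m.
have cw h : h \in P -> commute w h.
  by move=> Ph; rewrite /w -(expg1 h); apply: commuteX2; apply: cz.
have hx : a ^ x = a * w.
  have ac : a ^ c = a by apply/conjg_fixP/commgP; apply: (centsP cAA).
  by rewrite ex conjgM ac conjz.
have hx2 : a ^ (x ^+ 2) = a * w ^+ 2.
  rewrite expgS expg1 conjgM hx conjMg hx (conjg_fixP _) -?mulgA -?expgS //.
  by apply/commgP; apply: cw.
have ea : a = (a ^ x) ^+ 2 * (a ^ (x ^+ 2))^-1.
  rewrite hx hx2 expgMn; last by apply: commute_sym; apply: cw.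
  by rewrite invMg mulgA mulgK expgS expg1 mulgK.
have := defA; rewrite (bigD1 i0) //= => dA.
have [[K H dK dH] _ _ tiKH] := dprodP dA.
have HY := bigdprodWY dH.
have Hi (j : 'I_p) : j != i0 -> a ^ (x ^+ j) \in H.
  move=> nj; rewrite -HY; apply: mem_gen; apply/bigcupP; exists j => //.
  exact: cycle_id.
have aH : a \in H.
  rewrite ea groupM ?groupV ?groupX //; last exact: (Hi i2).
  by have := Hi i1 isT; rewrite /= expg1.
have aK : a \in K by rewrite -dK /= expg0 conjg1 cycle_id.
have : a \in K :&: H by rewrite inE aK aH.
rewrite -dK -dH tiKH => /set1P a1.
by move: oa pr; rewrite a1 order1 => <-.
Qed.

Theorem lemma3p1 (p : nat) (gT : finGroupType) (P : {group gT}) :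
  prime p -> is_wreath_CpCp p P ->
  forall i : nat, upper_eta p i P = 'Z_i(P).
Proof.
move=> pr hw.
have [A [nsAP iA cAA eA Z2A]] := wreath_facts pr hw.
exact: (abstract_main pr nsAP iA cAA eA Z2A).
Qed.
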